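(* Let $d\in\mathbb{Z}_2$ with $d\equiv 3\pmod 4$ and consider $f(x)=x^2+x-d$ as a map $\mathbb{Z}_2\to\mathbb{Z}_2$. Then $f(2\mathbb{Z}_2)\subset 1+2\mathbb{Z}_2$, and $1+2\mathbb{Z}_2$ is the unique minimal component of $f$.
   Context: A minimal component of $f$ is a clopen set $E\subset\mathbb{Z}_2$ with $f(E)\subset E$ such that $f:E\to E$ is minimal (every orbit in $E$ is dense in $E$). *)

(* Defs.v *)
From Stdlib Require Import ZArith.
Open Scope Z_scope.

(* A 2-adic integer x = sum_i x_i 2^i, given by its binary digits. *)
Definition Z2 : Type := nat -> bool.

Fixpoint trunc (x : Z2) (n : nat) : Z :=
  match n with
  | O => 0
  | S m => trunc x m + (if x m then 2 ^ Z.of_nat m else 0)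
  end.

(* Ring operations: digit i of the result is digit i of the corresponding
   integer operation on the truncations mod 2^(i+1) (Z.testbit uses two's
   complement on negatives, which is exactly the 2-adic expansion). *)
Definition Z2_of_Z (z : Z) : Z2 := fun i => Z.testbit z (Z.of_nat i).
Definition Z2add (x y : Z2) : Z2 :=
  fun i => Z.testbit (trunc x (S i) + trunc y (S i)) (Z.of_nat i).
Definition Z2sub (x y : Z2) : Z2 :=
  fun i => Z.testbit (trunc x (S i) - trunc y (S i)) (Z.of_nat i).
Definition Z2mul (x y : Z2) : Z2 :=
  fun i => Z.testbit (trunc x (S i) * trunc y (S i)) (Z.of_nat i).

Definition fd (d : Z2) (x : Z2) : Z2 := Z2sub (Z2add (Z2mul x x) x) d.

(* Topology of Z_2: the balls x + 2^n Z_2 (agreement of first n digits). *)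
Definition agree (n : nat) (x y : Z2) : Prop := forall i, (i < n)%nat -> x i = y i.

Definition Z2open (U : Z2 -> Prop) : Prop :=
  forall x, U x -> exists n, forall y, agree n x y -> U y.
Definition Z2closed (U : Z2 -> Prop) : Prop := Z2open (fun x => ~ U x).
Definition Z2clopen (U : Z2 -> Prop) : Prop := Z2open U /\ Z2closed U.

Fixpoint iter (f : Z2 -> Z2) (k : nat) (x : Z2) : Z2 :=
  match k with O => x | S k' => f (iter f k' x) end.

Definition orbit_dense_in (f : Z2 -> Z2) (x : Z2) (E : Z2 -> Prop) : Prop :=
  forall y, E y -> forall n, exists k, E (iter f k x) /\ agree n (iter f k x) y.

Definition minimal_component (f : Z2 -> Z2) (E : Z2 -> Prop) : Prop :=
  Z2clopen E /\ (exists x, E x) /\ (forall x, E x -> E (f x)) /\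
  (forall x, E x -> orbit_dense_in f x E).

Definition twoZ2 (x : Z2) : Prop := x O = false.
Definition onePlusTwoZ2 (x : Z2) : Prop := x O = true.

(* Main.v *)
Require Import Defs.
From Stdlib Require Import ZArith Lia Classical.
Open Scope Z_scope.

Lemma pow2_pos n : 0 < 2 ^ Z.of_nat n.
Proof. apply Z.pow_pos_nonneg; lia. Qed.

Lemma trunc_bounds x n : 0 <= trunc x n < 2 ^ Z.of_nat n.
Proof.
  induction n as [|n IH]; simpl trunc.
  - simpl; lia.
  - rewrite Nat2Z.inj_succ, Z.pow_succ_r by lia.
    pose proof (pow2_pos n). destruct (x n); lia.
Qed.

Lemma trunc_bits x n i : (i < n)%nat -> Z.testbit (trunc x n) (Z.of_nat i) = x i.
Proof.
  induction n as [|n IH]; intros Hi; [lia|].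
  simpl trunc. pose proof (trunc_bounds x n) as Hb. pose proof (pow2_pos n).
  destruct (Nat.lt_ge_cases i n) as [Hl|Hg].
  - rewrite <- (Z.mod_pow2_bits_low _ (Z.of_nat n)) by lia.
    replace ((trunc x n + (if x n then 2 ^ Z.of_nat n else 0)) mod 2 ^ Z.of_nat n)
      with (trunc x n). apply IH; exact Hl.
    symmetry. destruct (x n).
    + replace (trunc x n + 2 ^ Z.of_nat n) with (trunc x n + 1 * 2 ^ Z.of_nat n) by ring.
      rewrite Z_mod_plus_full. apply Z.mod_small; lia.
    + rewrite Z.add_0_r. apply Z.mod_small; lia.
  - assert (i = n) by lia. subst i.
    assert (Hs := Z.testbit_spec' (trunc x n + (if x n then 2 ^ Z.of_nat n else 0)) (Z.of_nat n) ltac:(lia)).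
    destruct (x n).
    + replace (trunc x n + 2 ^ Z.of_nat n) with (trunc x n + 1 * 2 ^ Z.of_nat n) in Hs |- * by ring.
      rewrite Z.div_add in Hs by lia. rewrite Z.div_small in Hs by lia.
      set (t := Z.testbit _ _) in Hs |- *. destruct t; [reflexivity|]. compute in Hs; discriminate.
    + rewrite Z.add_0_r in Hs |- *. rewrite Z.div_small in Hs by lia.
      set (t := Z.testbit _ _) in Hs |- *. destruct t; [|reflexivity]. compute in Hs; discriminate.
Qed.

Lemma trunc_high x n i : (Z.of_nat n <= i) -> Z.testbit (trunc x n) i = false.
Proof.
  intros H. pose proof (trunc_bounds x n).
  rewrite <- (Z.mod_small (trunc x n) (2 ^ Z.of_nat n)) by lia.
  apply Z.mod_pow2_bits_high; lia.
Qed.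

Lemma trunc_of_bits (z : Z2) n W :
  (forall i, (i < n)%nat -> z i = Z.testbit W (Z.of_nat i)) -> trunc z n = W mod 2 ^ Z.of_nat n.
Proof.
  intros H. apply Z.bits_inj'. intros i Hi.
  destruct (Z_lt_le_dec i (Z.of_nat n)).
  - rewrite Z.mod_pow2_bits_low by lia.
    replace i with (Z.of_nat (Z.to_nat i)) by lia.
    rewrite trunc_bits by lia. apply H. lia.
  - rewrite Z.mod_pow2_bits_high by lia. apply trunc_high; lia.
Qed.

Lemma trunc_mod x n m : (m <= n)%nat -> trunc x n mod 2 ^ Z.of_nat m = trunc x m.
Proof.
  intros Hmn. symmetry. apply trunc_of_bits. intros i Hi.
  rewrite trunc_bits by lia. reflexivity.
Qed.

Lemma testbit_modeq a b i :
  a mod 2 ^ Z.of_nat (S i) = b mod 2 ^ Z.of_nat (S i) -> Z.testbit a (Z.of_nat i) = Z.testbit b (Z.of_nat i).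
Proof.
  intros H. rewrite <- (Z.mod_pow2_bits_low a (Z.of_nat (S i))) by lia.
  rewrite <- (Z.mod_pow2_bits_low b (Z.of_nat (S i))) by lia. now rewrite H.
Qed.

Lemma pow_ne n : 2 ^ Z.of_nat n <> 0.
Proof. pose proof (pow2_pos n); lia. Qed.

Lemma trunc_mul x y n : trunc (Z2mul x y) n = (trunc x n * trunc y n) mod 2 ^ Z.of_nat n.
Proof.
  apply trunc_of_bits. intros i Hi. unfold Z2mul. apply testbit_modeq.
  rewrite <- (trunc_mod x n (S i)), <- (trunc_mod y n (S i)) by lia.
  rewrite <- Z.mul_mod by apply pow_ne. reflexivity.
Qed.

Lemma trunc_add x y n : trunc (Z2add x y) n = (trunc x n + trunc y n) mod 2 ^ Z.of_nat n.
Proof.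
  apply trunc_of_bits. intros i Hi. unfold Z2add. apply testbit_modeq.
  rewrite <- (trunc_mod x n (S i)), <- (trunc_mod y n (S i)) by lia.
  rewrite <- Z.add_mod by apply pow_ne. reflexivity.
Qed.

Lemma trunc_sub x y n : trunc (Z2sub x y) n = (trunc x n - trunc y n) mod 2 ^ Z.of_nat n.
Proof.
  apply trunc_of_bits. intros i Hi. unfold Z2sub. apply testbit_modeq.
  rewrite <- (trunc_mod x n (S i)), <- (trunc_mod y n (S i)) by lia.
  rewrite Zminus_mod_idemp_l, Zminus_mod_idemp_r. reflexivity.
Qed.

Definition fI (D z : Z) : Z := z * z + z - D.
Fixpoint itI (D : Z) (k : nat) (z : Z) : Z :=
  match k with O => z | S k' => fI D (itI D k' z) end.

Lemma trunc_fd d x n : trunc (fd d x) n = fI (trunc d n) (trunc x n) mod 2 ^ Z.of_nat n.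
Proof.
  unfold fd. rewrite trunc_sub, trunc_add, trunc_mul.
  rewrite Zplus_mod_idemp_l, Zminus_mod_idemp_l. reflexivity.
Qed.

Lemma fI_mod D z M : M <> 0 -> fI D (z mod M) mod M = fI D z mod M.
Proof.
  intros HM. pose proof (Z.div_mod z M HM) as E.
  set (r := z mod M) in *. set (q := z / M) in *.
  rewrite E. unfold fI.
  replace ((M * q + r) * (M * q + r) + (M * q + r) - D)
    with ((r * r + r - D) + (q * (M * q + 2 * r + 1)) * M) by ring.
  rewrite Z_mod_plus_full. reflexivity.
Qed.

Lemma trunc_iter d x N k :
  trunc (Defs.iter (fd d) k x) N = itI (trunc d N) k (trunc x N) mod 2 ^ Z.of_nat N.
Proof.
  induction k as [|k IH]; simpl.
  - pose proof (trunc_bounds x N). rewrite Z.mod_small; lia.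
  - rewrite trunc_fd, IH, fI_mod by apply pow_ne. reflexivity.
Qed.

Lemma agree_trunc n x y : agree n x y -> trunc x n = trunc y n.
Proof.
  induction n as [|n IH]; intros H; simpl; auto.
  rewrite IH by (intros i Hi; apply H; lia). rewrite (H n) by lia. reflexivity.
Qed.

Lemma trunc_agree n x y : trunc x n = trunc y n -> agree n x y.
Proof.
  intros H i Hi. rewrite <- (trunc_bits x n i Hi), <- (trunc_bits y n i Hi), H. reflexivity.
Qed.

Lemma itI_add D j k z : itI D (j + k) z = itI D j (itI D k z).
Proof. induction j; simpl; congruence. Qed.

Lemma fI_odd D q a : D = 4*q+3 -> fI D (2*a+1) = 2*(2*a*a+3*a-2*q-1)+1.
Proof. intros ->; unfold fI; ring. Qed.

Lemma itI_odd D q k a : D = 4*q+3 -> exists a', itI D k (2*a+1) = 2*a'+1.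
Proof.
  intros HD. induction k as [|k [a' IH]]; cbn [itI].
  - exists a; reflexivity.
  - rewrite IH. eexists. apply (fI_odd D q a' HD).
Qed.

Lemma S1 D q a : D = 4*q+3 -> forall j s, exists r,
  itI D j (2*a+1+2*s) = itI D j (2*a+1) + 2*s*(2*r+1).
Proof.
  intros HD j. induction j as [|j IH]; intros s; cbn [itI].
  - exists 0. ring.
  - destruct (IH s) as [r Hr]. rewrite Hr.
    destruct (itI_odd D q j a HD) as [a' Ha']. rewrite Ha'.
    exists (2*r*(2*a'+1+s*(2*r+1)) + r + (2*a'+1+s*(2*r+1))).
    unfold fI. ring.
Qed.

Lemma S2 D q a : D = 4*q+3 -> forall k s, exists r,
  itI D (2*k) (2*a+1+4*s) = itI D (2*k) (2*a+1) + 4*s*(4*r+1).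
Proof.
  intros HD k. induction k as [|k IH]; intros s.
  - exists 0. simpl. ring.
  - replace (2 * S k)%nat with (S (S (2*k)))%nat by lia. cbn [itI].
    destruct (IH s) as [r Hr]. rewrite Hr.
    destruct (itI_odd D q (2*k) a HD) as [a' Ha']. rewrite Ha'.
    set (s1 := s*(4*r+1)).
    set (A := a' + s1).
    assert (E1 : fI D (2*a'+1 + 4*s1) = fI D (2*a'+1) + 4*s1*(4*A+3)) by (unfold A, fI; ring).
    replace (2*a'+1 + 4*s*(4*r+1)) with (2*a'+1 + 4*s1) by (unfold s1; ring).
    rewrite E1. rewrite (fI_odd D q a' HD).
    set (a'' := 2*a'*a'+3*a'-2*q-1).
    set (s2 := s1*(4*A+3)).
    set (B := a'' + s2).
    assert (E2 : fI D (2*a''+1 + 4*s2) = fI D (2*a''+1) + 4*s2*(4*B+3)) by (unfold B, fI; ring).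
    replace (2*a''+1 + 4*s1*(4*A+3)) with (2*a''+1 + 4*s2) by (unfold s2; ring).
    rewrite E2.
    set (C := 4*A*B + 3*A + 3*B + 2).
    exists (4*r*C + r + C). unfold s2, s1, C. ring.
Qed.

Lemma even_mul_succ a : exists c, a*(a+1) = 2*c.
Proof.
  destruct (Z.Even_or_Odd a) as [[b Hb]|[b Hb]]; subst.
  - exists (b*(2*b+1)); ring.
  - exists ((2*b+1)*(b+1)); ring.
Qed.

Lemma pw1 m : 2^(Z.of_nat (S m) + 1) = 4 * 2^(Z.of_nat m).
Proof.
  replace (Z.of_nat (S m) + 1) with (Z.of_nat m + 2) by lia.
  rewrite Z.pow_add_r by lia. ring.
Qed.
Lemma pw2 m : 2^(Z.of_nat (S (S m)) + 1) = 8 * 2^(Z.of_nat m).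
Proof.
  replace (Z.of_nat (S (S m)) + 1) with (Z.of_nat m + 3) by lia.
  rewrite Z.pow_add_r by lia. ring.
Qed.

Lemma L D q : D = 4*q+3 -> forall m a, exists h,
  itI D (2^m) (2*a+1) = 2*a+1 + 2^(Z.of_nat m + 1)*(2*h+1).
Proof.
  intros HD m. induction m as [|m IH]; intros a.
  - cbn [Nat.pow itI]. rewrite (fI_odd D q a HD). exists (a*a+a-q-1). replace (2 ^ (Z.of_nat 0 + 1)) with 2 by reflexivity. ring.
  - destruct m as [|m].
    + cbn [Nat.pow itI Nat.mul Nat.add]. rewrite (fI_odd D q a HD).
      set (a' := 2*a*a+3*a-2*q-1).
      rewrite (fI_odd D q a' HD).
      destruct (even_mul_succ a) as [c Hc]. destruct (even_mul_succ a') as [c' Hc'].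
      exists (c + c' - q - 1). unfold a' in *. nia.
    + rewrite Nat.pow_succ_r', Nat.mul_comm, Nat.mul_succ_r, Nat.mul_1_r.
      rewrite itI_add. destruct (IH a) as [h Hh]. rewrite Hh.
      rewrite Nat.pow_succ_r'.
      destruct (S2 D q a HD (2^m) (2^(Z.of_nat m) * (2*h+1))) as [r Hr].
      rewrite pw1.
      replace (2 * a + 1 + 4 * 2 ^ Z.of_nat m * (2 * h + 1)) with
        (2 * a + 1 + 4 * (2 ^ Z.of_nat m * (2 * h + 1))) by ring.
      rewrite Hr.
      rewrite <- Nat.pow_succ_r', Hh.
      exists (2*h*r + h + r).
      rewrite pw2.
      rewrite pw1.
      ring.
Qed.

Lemma T D q : D = 4*q+3 -> forall N, (1 <= N)%nat -> forall a b, exists k e,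
  itI D k (2*a+1) = 2*b+1 + 2^(Z.of_nat N) * e.
Proof.
  intros HD N HN. induction N as [|N IH]; [lia|]. intros a b.
  destruct N as [|M].
  - exists O, (a-b). cbn [itI]. change (2^Z.of_nat 1) with 2. ring.
  - destruct (IH ltac:(lia) a b) as [k [e He]].
    destruct (Z.Even_or_Odd e) as [[e' ->]|[e' ->]].
    + exists k, e'. rewrite He, (Nat2Z.inj_succ (S M)), Z.pow_succ_r by lia. ring.
    + destruct (L D q HD M b) as [h Hh].
      destruct (S1 D q b HD (2^M) (2^(Z.of_nat M)*(2*e'+1))) as [r Hr].
      exists (2^M + k)%nat, (h + 1 + 2*e'*r + e' + r).
      rewrite itI_add, He.
      replace (2 * b + 1 + 2 ^ Z.of_nat (S M) * (2 * e' + 1)) with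
        (2 * b + 1 + 2 * (2 ^ Z.of_nat M * (2 * e' + 1))) by
        (rewrite Nat2Z.inj_succ, Z.pow_succ_r by lia; ring).
      rewrite Hr, Hh.
      rewrite !Nat2Z.inj_succ, !Z.pow_succ_r by lia.
      replace (Z.of_nat M + 1) with (Z.succ (Z.of_nat M)) by lia.
      rewrite Z.pow_succ_r by lia. ring.
Qed.

Lemma trunc1 x : trunc x 1 = if x O then 1 else 0.
Proof. simpl. destruct (x O); reflexivity. Qed.

Lemma fd_digit0 d x : trunc d 2 = 3 -> fd d x O = true.
Proof.
  intros hd.
  assert (Hd1 : trunc d 1 = 1) by (rewrite <- (trunc_mod d 2 1) by lia; rewrite hd; reflexivity).
  rewrite <- (trunc_bits (fd d x) 1 0) by lia.
  rewrite trunc_fd, Hd1, trunc1. destruct (x O); reflexivity.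
Qed.

Lemma iter_odd d x k : trunc d 2 = 3 -> onePlusTwoZ2 x -> onePlusTwoZ2 (Defs.iter (fd d) k x).
Proof.
  intros hd Hx. destruct k; simpl; [exact Hx|]. apply fd_digit0; exact hd.
Qed.

Lemma odd_trunc x N : (1 <= N)%nat -> x O = true -> trunc x N = 2 * (trunc x N / 2) + 1.
Proof.
  intros HN Hx. pose proof (Z.div_mod (trunc x N) 2 ltac:(lia)).
  assert (trunc x N mod 2 = 1).
  { change 2 with (2 ^ Z.of_nat 1). rewrite trunc_mod by lia. rewrite trunc1, Hx. reflexivity. }
  lia.
Qed.

Lemma dense d (hd : trunc d 2 = 3) x : onePlusTwoZ2 x -> orbit_dense_in (fd d) x onePlusTwoZ2.
Proof.
  intros Hx y Hy n.
  set (N := S (S n)).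
  set (D := trunc d N).
  assert (HD : D = 4 * (D / 4) + 3).
  { assert (D mod 4 = 3).
    { unfold D. change 4 with (2 ^ Z.of_nat 2). rewrite trunc_mod by (unfold N; lia). exact hd. }
    pose proof (Z.div_mod D 4 ltac:(lia)). lia. }
  destruct (T D (D/4) HD N ltac:(unfold N; lia) (trunc x N / 2) (trunc y N / 2)) as [k [e He]].
  exists k. split. { apply iter_odd; assumption. }
  intros i Hi. apply (trunc_agree N); [|unfold N; lia].
  assert (Hxo := odd_trunc x N ltac:(unfold N; lia) Hx).
  assert (Hyo := odd_trunc y N ltac:(unfold N; lia) Hy).
  rewrite trunc_iter. fold D. rewrite Hxo at 1.
  rewrite He. rewrite <- Hyo.
  rewrite (Z.mul_comm (2 ^ Z.of_nat N) e), Z_mod_plus_full.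
  pose proof (trunc_bounds y N). apply Z.mod_small; lia.
Qed.

Theorem theoremF (d : Z2) (hd : trunc d 2 = 3%Z) :
  (forall x, twoZ2 x -> onePlusTwoZ2 (fd d x)) /\
  minimal_component (fd d) onePlusTwoZ2 /\
  (forall E, minimal_component (fd d) E -> forall x, E x <-> onePlusTwoZ2 x).
Proof.
  assert (Hinv : forall x, onePlusTwoZ2 (fd d x)) by (intros x; apply fd_digit0; exact hd).
  assert (Hmin : minimal_component (fd d) onePlusTwoZ2).
  { split; [split|split; [|split]].
    - intros x Hx. exists 1%nat. intros y Hy. unfold onePlusTwoZ2 in *. rewrite <- Hy by lia. exact Hx.
    - intros x Hx. exists 1%nat. intros y Hy Hy'. apply Hx. unfold onePlusTwoZ2 in *. rewrite Hy by lia. exact Hy'.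
    - exists (fun _ => true). reflexivity.
    - intros x _. apply Hinv.
    - intros x Hx. apply dense; assumption. }
  split; [intros; apply Hinv|split; [exact Hmin|]].
  intros E [[Eo Ec] [[x0 Hx0] [Einv Edense]]] x.
  split.
  - intros Hx. unfold onePlusTwoZ2. destruct (x O) eqn:Ex; [reflexivity|exfalso].
    destruct (Eo x Hx) as [n Hn].
    set (z := fun i => if Nat.eqb i n then negb (x n) else x i).
    assert (Hz : E z).
    { apply Hn. intros i Hi. unfold z. destruct (Nat.eqb_spec i n); [lia|reflexivity]. }
    destruct (Edense z Hz x Hx (S n)) as [k [_ Hk]].
    destruct k as [|k].
    + simpl in Hk. specialize (Hk n ltac:(lia)). unfold z in Hk.
      rewrite Nat.eqb_refl in Hk. destruct (x n); discriminate.
    + specialize (Hk O ltac:(lia)). simpl in Hk. rewrite fd_digit0 in Hk by exact hd.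
      congruence.
  - intros Hx.
    assert (Hx1 : E (fd d x0)) by (apply Einv; exact Hx0).
    apply NNPP. intros HnE.
    destruct (Ec x HnE) as [n Hn].
    destruct (dense d hd (fd d x0) (Hinv x0) x Hx n) as [k [_ Hk]].
    assert (HE : E (Defs.iter (fd d) k (fd d x0))).
    { clear Hk. induction k; simpl; auto. }
    apply (Hn _ (fun i Hi => eq_sym (Hk i Hi))). exact HE.
Qed.
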